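(* Let $\mathcal{C}=\{C_1,\ldots,C_r\}$ be a partition of $C=[n]$. Suppose $q$ and all $q^{C_j}$ are symmetric, i.e. $q(A)=1/\binom{n}{|A|}$ and $q^{C_j}(A_j)=1/\binom{n_j}{|A_j|}$. Consider a system consisting of $r$ modules $(C_j,\chi_j)$ (each $\chi_j$ semicoherent) connected in series, i.e. $\phi(\mathbf{x})=\prod_{j=1}^r\chi_j(\mathbf{x}^{C_j})$. Then for every $0\le k\le n$, $$\overline{P}_{n-k}=\sum_{\substack{0\le a_j\le n_j\\ a_1+\cdots+a_r=k}}\frac{\binom{n_1}{a_1}\cdots\binom{n_r}{a_r}}{\binom{n}{k}}\prod_{j=1}^r\overline{P}_{j,n_j-a_j}.$$
   Context: Consider components $C=[n]$ with random lifetimes $T_1,\ldots,T_n$ whose joint distribution has no ties. Subsets are identified with Boolean vectors. A structure is semicoherent if it is nondecreasing in each variable, maps $\mathbf{0}$ to $0$ and $\mathbf{1}$ to $1$. The relative quality function is $q(A)=\Pr(\max_{i\notin A}T_i<\min_{i\in A}T_i)$, with $q(\varnothing)=q([n])=1$. For a partition into nonempty blocks $C_j$, write $n_j=|C_j|$, $A_j=A\cap C_j$, $\mathbf{x}^{C_j}=(x_i)_{i\in C_j}$, and $q^{C_j}(A)=\Pr(\max_{i\in C_j\setminus A}T_i<\min_{i\in A}T_i)$ for $A\subseteq C_j$. The tail probability signatures are $\overline{P}_k=\sum_{|A|=n-k}q(A)\phi(A)$ for the system and $\overline{P}_{j,k}=\sum_{A\subseteq C_j,|A|=n_j-k}q^{C_j}(A)\chi_j(A)$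 for module $j$. *)

(* Defs.v *)
From HB Require Import structures.
From mathcomp Require Import all_boot all_order all_algebra.
From mathcomp Require Import perm.
Set Implicit Arguments. Unset Strict Implicit. Unset Printing Implicit Defensive.
Import Order.TTheory GRing.Theory Num.Theory.
Local Open Scope ring_scope.

(* The ranking of the (tie-free) lifetimes T_1..T_n is a permutation s of 'I_n:
   s i < s j  iff  T_i < T_j.  Every event used in the paper (comparisons of
   lifetimes) is an event about this ranking, so the joint distribution enters
   only through the law p of the ranking permutation. *)
Definition is_rank_law (R : realFieldType) (n : nat) (p : {perm 'I_n} -> R) :=
  (forall s, 0 <= p s) /\ \sum_(s : {perm 'I_n}) p s = 1.

(* q^D(A) = Pr(max_{i in D \ A} T_i < min_{i in A} T_i), for A a subset of D. *)
Definition qsub (R : realFieldType) (n : nat) (p : {perm 'I_n} -> R)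
  (D A : {set 'I_n}) : R :=
  \sum_(s : {perm 'I_n} |
        [forall i, forall j, ((i \in D :\: A) && (j \in A)) ==> (s i < s j)%N])
     p s.

Definition qrel (R : realFieldType) (n : nat) (p : {perm 'I_n} -> R)
  (A : {set 'I_n}) : R := qsub p [set: 'I_n] A.

Definition semicoherent_on (n : nat) (D : {set 'I_n}) (chi : {set 'I_n} -> bool) :=
  [/\ forall A B : {set 'I_n}, A \subset B -> B \subset D -> chi A -> chi B,
      chi set0 = false & chi D = true].

Definition Pbar (R : realFieldType) (n : nat) (p : {perm 'I_n} -> R)
  (phi : {set 'I_n} -> bool) (k : nat) : R :=
  \sum_(A : {set 'I_n} | #|A| == (n - k)%N) qrel p A * (phi A)%:R.

Definition Pbar_mod (R : realFieldType) (n : nat) (p : {perm 'I_n} -> R)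
  (D : {set 'I_n}) (chi : {set 'I_n} -> bool) (k : nat) : R :=
  \sum_(A : {set 'I_n} | (A \subset D) && (#|A| == (#|D| - k)%N))
     qsub p D A * (chi A)%:R.

(* Main.v *)
Require Import Defs.
From HB Require Import structures.
From mathcomp Require Import all_boot all_order all_algebra.
From mathcomp Require Import perm.
Import Order.TTheory GRing.Theory Num.Theory.
Section Key.
Variables (n r : nat) (C : 'I_r -> {set 'I_n}) (chi : 'I_r -> {set 'I_n} -> bool).
Hypothesis Cdisj : forall j j', j != j' -> [disjoint C j & C j'].
Hypothesis Ccov : forall i, exists j, i \in C j.

Lemma card_bigcup_disj (f : {ffun 'I_r -> {set 'I_n}}) :
  (forall j, f j \subset C j) -> #|\bigcup_j f j| = (\sum_j #|f j|)%N.
Proof.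
move=> fC.
have cardS (A : {set 'I_n}) : #|A| = (\sum_x (x \in A : nat))%N.
  by rewrite -sum1_card big_mkcond /=; apply: eq_bigr => x _; case: (x \in A).
rewrite cardS (eq_bigr (fun j => \sum_x (x \in f j : nat))%N); last by move=> j _; rewrite cardS.
rewrite (exchange_big _ _ _ _ _ (fun j x => (x \in f j : nat))) /=.
apply: eq_bigr => x _.
case: (boolP (x \in \bigcup_j f j)) => [/bigcupP[j0 _ xj0] | xn].
  rewrite (bigD1 j0) //= xj0 big1 // => j nj.
  apply/eqP; rewrite eqb0; apply/negP => xj.
  have := disjointFr (Cdisj _ _ nj) (subsetP (fC j) _ xj).
  by rewrite (subsetP (fC j0) _ xj0).
rewrite big1 // => j _; apply/eqP; rewrite eqb0; apply: contra xn => xj.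
by apply/bigcupP; exists j.
Qed.

Definition Mid k := (\sum_(f : {ffun 'I_r -> {set 'I_n}} |
   [forall j, f j \subset C j] && ((\sum_j #|f j|)%N == k)) \prod_j (chi j (f j) : nat))%N.

Lemma LHS_mid k :
  (\sum_(A : {set 'I_n} | #|A| == k) \prod_j (chi j (A :&: C j) : nat))%N = Mid k.
Proof.
rewrite (reindex_onto (fun f : {ffun 'I_r -> {set 'I_n}} => \bigcup_j f j)
                      (fun A => [ffun j => A :&: C j])) /=; last first.
  move=> A _; apply/setP => i; apply/bigcupP/idP => [[j _]|iA].
    by rewrite ffunE inE => /andP[].
  by have [j ij] := Ccov i; exists j => //; rewrite ffunE inE iA.
rewrite /Mid; apply: eq_big => f.
  case: (boolP [forall j, f j \subset C j]) => [/forallP fC | nfC].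
    rewrite card_bigcup_disj //.
    suff -> : [ffun j => (\bigcup_j0 f j0) :&: C j] == f by rewrite andbT.
    apply/eqP/ffunP => j; rewrite ffunE; apply/setP => x; rewrite inE.
    apply/andP/idP => [[/bigcupP[j0 _ x0] xj]|xj]; last first.
      by split; [apply/bigcupP; exists j | apply: (subsetP (fC j))].
    case: (eqVneq j0 j) => [<- //| nj].
    have := disjointFr (Cdisj _ _ nj) (subsetP (fC j0) _ x0).
    by rewrite xj.
  apply/negbTE; apply: contra nfC => /andP[_ /eqP <-].
  by apply/forallP => j; rewrite ffunE subsetIr.
move=> /andP[_ /eqP fE]; apply: eq_bigr => j _.
by move/ffunP/(_ j): fE; rewrite ffunE => ->.
Qed.

Lemma RHS_mid k :
  (\sum_(a : {ffun 'I_r -> 'I_n.+1} |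
          [forall j, (a j <= #|C j|)%N] && ((\sum_j (a j : nat))%N == k))
   \prod_j \sum_(B : {set 'I_n} | (B \subset C j) && (#|B| == a j)) (chi j B : nat))%N
  = Mid k.
Proof.
have cle j : (#|C j| < n.+1)%N by rewrite ltnS (leq_trans (max_card _)) ?card_ord.
rewrite /Mid (partition_big (fun f : {ffun 'I_r -> {set 'I_n}} => [ffun j => inord #|f j| : 'I_n.+1])
  (fun a : {ffun 'I_r -> 'I_n.+1} => [forall j, (a j <= #|C j|)%N] && ((\sum_j (a j : nat))%N == k))) /=; last first.
  move=> f /andP[/forallP fC /eqP sk].
  have e j : ([ffun j => inord #|f j| : 'I_n.+1] j : nat) = #|f j|.
    by rewrite ffunE inordK // (leq_ltn_trans (subset_leq_card (fC j))).
  apply/andP; split; first by apply/forallP => j; rewrite e subset_leq_card.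
  by rewrite -sk; apply/eqP; apply: eq_bigr => j _; rewrite e.
apply: eq_bigr => a /andP[/forallP aC /eqP ak].
rewrite bigA_distr_big_dep; apply: eq_bigl => f.
apply/familyP/andP => [fa | [/andP[/forallP fC _] /eqP fa] j].
  have fC j : f j \subset C j by have /andP[] := fa j.
  have fj j : #|f j| = a j by have /andP[_ /eqP] := fa j.
  split; first (apply/andP; split; first by apply/forallP).
    by apply/eqP; rewrite -ak; apply: eq_bigr => j _; rewrite fj.
  by apply/eqP/ffunP => j; rewrite ffunE fj; apply/val_inj; rewrite /= inordK.
rewrite unfold_in /= fC -fa ffunE /= inordK //.
by rewrite (leq_ltn_trans (subset_leq_card (fC j))).
Qed.
End Key.

Local Open Scope ring_scope.

Theorem mainTheorem9 (R : realFieldType) (n r : nat)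
  (p : {perm 'I_n} -> R) (C : 'I_r -> {set 'I_n})
  (chi : 'I_r -> {set 'I_n} -> bool) (phi : {set 'I_n} -> bool) :
  is_rank_law p ->
  (* C is a partition of [n] into nonempty blocks *)
  (forall j, C j != set0) ->
  (forall j j', j != j' -> [disjoint C j & C j']) ->
  (forall i, exists j, i \in C j) ->
  (* symmetry of q and of all q^{C_j} *)
  (forall A : {set 'I_n}, qrel p A = 1 / ('C(n, #|A|))%:R) ->
  (forall j (A : {set 'I_n}), A \subset C j ->
     qsub p (C j) A = 1 / ('C(#|C j|, #|A|))%:R) ->
  (* modules are semicoherent, connected in series *)
  (forall j, semicoherent_on (C j) (chi j)) ->
  (forall A, phi A = [forall j, chi j (A :&: C j)]) ->
  forall k : nat, (k <= n)%N ->
  Pbar p phi (n - k) =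
  \sum_(a : {ffun 'I_r -> 'I_n.+1} |
          [forall j, (a j <= #|C j|)%N] && ((\sum_j (a j : nat))%N == k))
     ((\prod_j 'C(#|C j|, a j))%N)%:R / ('C(n, k))%:R *
     \prod_j Pbar_mod p (C j) (chi j) (#|C j| - a j).
Proof.
Proof.
move=> _ _ Cdisj Ccov qsym qCsym _ phiE k kn.
have prodb (b : 'I_r -> bool) : ([forall j, b j] : nat) = (\prod_j (b j : nat))%N.
  case: (boolP [forall j, b j]) => [/forallP bt | /forallPn [j bj]].
    by rewrite big1 // => j _; rewrite bt.
  by rewrite (bigD1 j) //= (negbTE bj) mul0n.
rewrite /Pbar subKn //.
transitivity ((('C(n,k))%:R : R)^-1 *
  ((\sum_(A : {set 'I_n} | #|A| == k) \prod_j (chi j (A :&: C j) : nat))%N)%:R).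
  rewrite natr_sum mulr_sumr; apply: eq_bigr => A /eqP Ak.
  by rewrite qsym Ak phiE div1r prodb.
rewrite LHS_mid // -RHS_mid // natr_sum mulr_sumr; apply: eq_bigr => a /andP[/forallP aC _].
have PM j : Pbar_mod p (C j) (chi j) (#|C j| - a j) =
   ((\sum_(B : {set 'I_n} | (B \subset C j) && (#|B| == a j)) (chi j B : nat))%N)%:R
     / ('C(#|C j|, a j))%:R.
  rewrite /Pbar_mod subKn // natr_sum mulr_suml; apply: eq_bigr => B /andP[BC /eqP Ba].
  by rewrite qCsym // Ba div1r mulrC.
rewrite (eq_bigr _ (fun j _ => PM j)) big_split /= prodfV !natr_prod.
have nz : (\prod_j ('C(#|C j|, a j))%:R : R) != 0.
  rewrite -natr_prod pnatr_eq0 -lt0n prodn_gt0 // => j; by rewrite bin_gt0.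
set PN := \prod_j _ .
set PC := \prod_j ('C(#|C j|, a j))%:R.
by rewrite [PC / _]mulrC -mulrA; congr (_ * _); rewrite mulrCA mulfV // mulr1.
Qed.
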